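(* Let $N_1,N_2,N_w,N_b,N$ and $T$ be as in the context, and let $\lambda_k=1-\frac{k(N-k+1)}{N_1N_2}$ for $k=0,\dots,N_w$. For each $k$ define $b^k=(b^k_0,\dots,b^k_{N_w})$ by $b^k_i=0$ for $i<k$ and $$b^k_i=(-1)^{i-k}\,\frac{(k-N_1)_{i-k}\,(k-N_w)_{i-k}}{(i-k)!\,(2k-N)_{i-k}},\qquad k\le i\le N_w$$ (all denominators are nonzero). Then $b^k$ satisfies, for all $i=0,\dots,N_w$ (with $b^k_{-1}:=0$), $$N_1N_2(\lambda_k-1)\,b^k_i=(N_1-i+1)(N_w-i+1)\,b^k_{i-1}-i\,(N_w-i+N_b+1)\,b^k_i,$$ and consequently the vector $c$ with $c_i=\sum_{j=i}^{N_w}(-1)^{j-i}\binom{j}{i}b^k_j$ is a nonzero right eigenvector of $T$ with eigenvalue $\lambda_k$. Equivalently, the polynomial $H^{(k)}(u,y,z)=\sum_{i=k}^{N_w}b^k_i\,u^iy^{N_1-i}z^{N_w-i}$ yields, via $G^{(k)}(x,y,z)=H^{(k)}(x-yz,y,z)=\sum_i c_i x^iy^{N_1-i}z^{N_w-i}$, the eigenvector coefficients $c_i$.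
   Context: Integers $N_1,N_2\ge1$, $N_w,N_b\ge0$ with $N_w+N_b=N_1+N_2=:N$, $N_w\le N_1$, $N_w\le N_2$. States $i\in\{0,\dots,N_w\}$. $p_i=\frac{(N_1-i)(N_w-i)}{N_1N_2}$, $q_i=\frac{i(N_b-N_1+i)}{N_1N_2}$, $r_i=1-p_i-q_i$. $T$ is the $(N_w+1)\times(N_w+1)$ matrix with $T_{i+1,i}=p_i$, $T_{i-1,i}=q_i$, $T_{ii}=r_i$, other entries $0$ (columns sum to 1). Right eigenvector: $Tc=\lambda c$. $(a)_n=a(a+1)\cdots(a+n-1)$, $(a)_0=1$. *)

(* Defs.v *)
From HB Require Import structures.
From mathcomp Require Import all_boot all_order all_algebra.
Set Implicit Arguments. Unset Strict Implicit. Unset Printing Implicit Defensive.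
Import Order.TTheory GRing.Theory Num.Theory.
Local Open Scope ring_scope.

Definition poch {R : numFieldType} (a : R) (n : nat) : R :=
  \prod_(m < n) (a + m%:R).

Section Chain.
Variables (R : numFieldType) (N1 N2 Nw Nb : nat).

Definition pp (i : nat) : R :=
  (N1%:R - i%:R) * (Nw%:R - i%:R) / (N1%:R * N2%:R).
Definition qq (i : nat) : R :=
  i%:R * (Nb%:R - N1%:R + i%:R) / (N1%:R * N2%:R).
Definition rr (i : nat) : R := 1 - pp i - qq i.

Definition Tmx : 'M[R]_(Nw.+1) :=
  \matrix_(a < Nw.+1, s < Nw.+1)
    if (a == s.+1 :> nat) then pp s
    else if (a.+1 == s :> nat) then qq s
    else if (a == s :> nat) then rr s
    else 0.

(* N = N1 + N2 *)
Definition lam (k : nat) : R :=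
  1 - (k%:R * ((N1 + N2)%:R - k%:R + 1)) / (N1%:R * N2%:R).

Definition bden (k i : nat) : R :=
  (i - k)`!%:R * poch (2 * k%:R - (N1 + N2)%:R) (i - k).

Definition bk (k i : nat) : R :=
  if (i < k)%N then 0
  else (-1) ^+ (i - k) * poch (k%:R - N1%:R) (i - k)
         * poch (k%:R - Nw%:R) (i - k) / bden k i.

Definition bprev (k i : nat) : R := if i is i'.+1 then bk k i' else 0.

Definition cvec (k : nat) : 'cV[R]_(Nw.+1) :=
  \col_(a < Nw.+1)
    \sum_(a <= j < Nw.+1) (-1) ^+ (j - a) * 'C(j, a)%:R * bk k j.

End Chain.

(* Main.v *)
Require Import Defs.
From HB Require Import structures.
From mathcomp Require Import all_boot all_order all_algebra.
From mathcomp Require Import zify ring.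
Import Order.TTheory GRing.Theory Num.Theory.
Local Open Scope ring_scope.

Lemma natr_sub_neq0 (R : numFieldType) (x y : nat) :
  (x != y)%N -> (x%:R - y%:R : R) != 0.
Proof. by move=> h; rewrite subr_eq0 eqr_nat. Qed.

Lemma poch_neq0 (R : numFieldType) (a : R) n :
  (forall m, (m < n)%N -> a + m%:R != 0) -> poch a n != 0.
Proof.
move=> h; rewrite /poch; apply/prodf_neq0 => i _; exact: h.
Qed.

Lemma pochS (R : numFieldType) (a : R) n : poch a n.+1 = poch a n * (a + n%:R).
Proof. by rewrite /poch big_ord_recr. Qed.

Lemma bden_neq0 (R : numFieldType) (N1 N2 Nw k i : nat) :
  (Nw + Nw <= N1 + N2)%N -> (k <= Nw)%N -> (i <= Nw)%N ->
  bden R N1 N2 k i != 0.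
Proof.
move=> hN hk hi; rewrite /bden mulf_neq0 //.
  by rewrite pnatr_eq0 -lt0n fact_gt0.
apply: poch_neq0 => m hm.
have -> : 2 * k%:R - (N1 + N2)%:R + m%:R = ((2 * k + m)%N%:R - (N1 + N2)%:R :> R).
  by rewrite !natrD; ring.
apply: natr_sub_neq0; apply/eqP; lia.
Qed.

Lemma bk_neq0 (R : numFieldType) (N1 N2 Nw k i : nat) :
  (Nw + Nw <= N1 + N2)%N -> (Nw <= N1)%N -> (k <= i)%N -> (i <= Nw)%N ->
  bk R N1 N2 Nw k i != 0.
Proof.
move=> hN h1 hk hi; rewrite /bk ltnNge hk /=.
have hb : bden R N1 N2 k i != 0.
  apply: (@bden_neq0 R N1 N2 Nw); lia.

rewrite mulf_neq0 ?invr_neq0 // !mulf_neq0 ?signr_eq0 //; apply: poch_neq0 => m hm.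
  have -> : k%:R - N1%:R + m%:R = ((k + m)%N%:R - N1%:R :> R) by rewrite natrD; ring.
  apply: natr_sub_neq0; apply/eqP; lia.
have -> : k%:R - Nw%:R + m%:R = ((k + m)%N%:R - Nw%:R :> R) by rewrite natrD; ring.
apply: natr_sub_neq0; apply/eqP; lia.
Qed.

Lemma bk_step (R : numFieldType) (N1 N2 Nw k n : nat) :
  (Nw + Nw <= N1 + N2)%N -> (k + n.+1 <= Nw)%N ->
  bk R N1 N2 Nw k (k + n.+1) * (n.+1%:R * (2 * k%:R - (N1 + N2)%:R + n%:R))
  = - ((k%:R - N1%:R + n%:R) * (k%:R - Nw%:R + n%:R)) * bk R N1 N2 Nw k (k + n).
Proof.
move=> hN hi.
have hb := @bden_neq0 R N1 N2 Nw k (k + n.+1) hN ltac:(lia) hi.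
rewrite /bden addKn in hb. rewrite (factS n) pochS natrM in hb.
move: hb; rewrite !mulf_eq0 !negb_or => /and3P[/andP[h1 h2] h3 h4].
rewrite /bk !ltnNge !leq_addr /= /bden !addKn (factS n) natrM !pochS exprS.
field.
by rewrite h3 h2 -natrD h4 nat1r h1.
Qed.

Lemma DD_neq0 (R : numFieldType) (N1 N2 : nat) :
  (1 <= N1)%N -> (1 <= N2)%N -> (N1%:R * N2%:R : R) != 0.
Proof. by move=> h1 h2; rewrite mulf_neq0 // pnatr_eq0 -lt0n. Qed.

Lemma bprev_kk (R : numFieldType) (N1 N2 Nw k : nat) : bprev R N1 N2 Nw k k = 0.
Proof. by case: k => [|k] //=; rewrite /bk ltnSn. Qed.

Lemma recur (R : numFieldType) (N1 N2 Nw Nb : nat)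
  (hN1 : (1 <= N1)%N) (hN2 : (1 <= N2)%N)
  (hsum : (Nw + Nb = N1 + N2)%N)
  (hw1 : (Nw <= N1)%N) (hw2 : (Nw <= N2)%N)
  (k : nat) (hk : (k <= Nw)%N) (i : nat) : (i <= Nw)%N ->
     N1%:R * N2%:R * (lam R N1 N2 k - 1) * bk R N1 N2 Nw k i =
       (N1%:R - i%:R + 1) * (Nw%:R - i%:R + 1) * bprev R N1 N2 Nw k i
       - i%:R * (Nw%:R - i%:R + Nb%:R + 1) * bk R N1 N2 Nw k i.
Proof.
move=> hi.
have hD := @DD_neq0 R N1 N2 hN1 hN2.
have hNb : (Nb%:R : R) = N1%:R + N2%:R - Nw%:R.
  have -> : Nb = ((N1 + N2) - Nw)%N by lia.
  by rewrite natrB ?natrD //; lia.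
have hN : (Nw + Nw <= N1 + N2)%N by lia.
case: (ltngtP i k) => hik.
- have h0 : bk R N1 N2 Nw k i = 0 by rewrite /bk hik.
  have h1 : bprev R N1 N2 Nw k i = 0.
    by case: i hi hik h0 => [|i] //= _ hik _; rewrite /bk (ltnW hik).
  by rewrite h0 h1 !mulr0 subr0.
- have [n hn] : exists n, i = (k + n.+1)%N by exists (i - k).-1; lia.
  subst i.
  have hstep := @bk_step R N1 N2 Nw k n hN hi.
  have hQ : (2 * k%:R - (N1 + N2)%:R + n%:R : R) != 0.
    have -> : 2 * k%:R - (N1 + N2)%:R + n%:R = ((2 * k + n)%N%:R - (N1 + N2)%:R :> R).
      by rewrite !natrD; ring.
    apply: natr_sub_neq0; apply/eqP; lia.
  have hn1 : (n.+1%:R : R) != 0 by rewrite pnatr_eq0.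
  have hP : (n.+1%:R * (2 * k%:R - (N1 + N2)%:R + n%:R) : R) != 0 by rewrite mulf_neq0.
  have hbi : bk R N1 N2 Nw k (k + n.+1) =
     - ((k%:R - N1%:R + n%:R) * (k%:R - Nw%:R + n%:R)) * bk R N1 N2 Nw k (k + n)
       / (n.+1%:R * (2 * k%:R - (N1 + N2)%:R + n%:R)).
    by rewrite -hstep mulfK.
  rewrite addnS /= -addnS hbi hNb /lam.
  field.
  move: hQ hn1 hD; rewrite !natrD -!nat1r mulf_eq0 negb_or => -> -> /andP[-> ->] //.
- rewrite hik.
  have h1 : bprev R N1 N2 Nw k k = 0 by apply: bprev_kk.
  rewrite h1 mulr0 add0r hNb /lam !natrD.
  field.
  move: hD; rewrite mulf_eq0 negb_or => /andP[-> ->] //.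
Qed.

Lemma Lrel (R : numFieldType) (n m : nat) :
  ('C(n, m.+1)%:R * m.+1%:R : R) = 'C(n, m)%:R * (n%:R - m%:R).
Proof.
case: (leqP m n) => h.
  by rewrite -natrB // -!natrM mulnC mul_bin_left mulnC.
by rewrite !bin_small ?mul0r // ltnW.
Qed.

Definition Ppart (R : numFieldType) (N1 N2 Nw : nat) (a : nat) : R :=
  if (0 < a)%N then pp R N1 N2 Nw a.-1 else 0.

Lemma coef (R : numFieldType) (N1 N2 Nw Nb : nat)
  (hN1 : (1 <= N1)%N) (hN2 : (1 <= N2)%N)
  (hsum : (Nw + Nb = N1 + N2)%N) (j a : nat) :
  Ppart R N1 N2 Nw a * ((-1) ^+ (j + a.-1) * 'C(j, a.-1)%:R)
  + qq R N1 N2 Nb a.+1 * ((-1) ^+ (j + a.+1) * 'C(j, a.+1)%:R)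
  + rr R N1 N2 Nw Nb a * ((-1) ^+ (j + a) * 'C(j, a)%:R)
  = (-1) ^+ (j + a) * 'C(j, a)%:R
      * (1 - j%:R * (Nw%:R - j%:R + Nb%:R + 1) / (N1%:R * N2%:R))
    + (-1) ^+ (j.+1 + a) * 'C(j.+1, a)%:R
      * ((N1%:R - j.+1%:R + 1) * (Nw%:R - j.+1%:R + 1) / (N1%:R * N2%:R)).
Proof.
have hD := @DD_neq0 R N1 N2 hN1 hN2.
have hNb : (Nb%:R : R) = N1%:R + N2%:R - Nw%:R.
  have -> : Nb = ((N1 + N2) - Nw)%N by lia.
  by rewrite natrB ?natrD //; lia.
move: hD; rewrite mulf_eq0 negb_or => /andP[hA hB].
rewrite /Ppart /rr /pp /qq hNb.
case: a => [|a] /=.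
  rewrite bin1 !bin0 ?addn0 ?addn1 ?addSn !exprS -!nat1r.
  set sg := (-1) ^+ j. clearbody sg. clear hNb hsum. field.
  by rewrite hA hB.
have hX := Lrel R j a.
have hZ := Lrel R j a.+1.
have ha1 : (a.+1%:R : R) != 0 by rewrite pnatr_eq0.
have ha2 : (a.+2%:R : R) != 0 by rewrite pnatr_eq0.
have eZ : ('C(j, a.+2)%:R : R) = 'C(j, a.+1)%:R * (j%:R - a.+1%:R) / a.+2%:R.
  by rewrite -hZ mulfK.
have eX : ('C(j, a.+1)%:R : R) = 'C(j, a)%:R * (j%:R - a%:R) / a.+1%:R.
  by rewrite -hX mulfK.
rewrite binS natrD eZ eX ?addnS ?addSn !exprS.
set sg := (-1) ^+ (j + a). clearbody sg.
move: ha1 ha2; rewrite -!nat1r => ha1 ha2.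
field.
by rewrite hA hB ha1 ha2.
Qed.

Definition cc (R : numFieldType) (N1 N2 Nw k a : nat) : R :=
  \sum_(0 <= j < Nw.+1) (-1) ^+ (j + a) * 'C(j, a)%:R * bk R N1 N2 Nw k j.

Definition Uf (R : numFieldType) (N1 N2 Nw Nb j : nat) : R :=
  1 - j%:R * (Nw%:R - j%:R + Nb%:R + 1) / (N1%:R * N2%:R).
Definition Vf (R : numFieldType) (N1 N2 Nw j : nat) : R :=
  (N1%:R - j%:R + 1) * (Nw%:R - j%:R + 1) / (N1%:R * N2%:R).

Lemma cc_out (R : numFieldType) (N1 N2 Nw k : nat) : cc R N1 N2 Nw k Nw.+1 = 0.
Proof.
rewrite /cc big1_seq // => j; rewrite mem_index_iota => /andP[_ hj].
by rewrite bin_small // mulr0 mul0r.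
Qed.

Lemma lam_b (R : numFieldType) (N1 N2 Nw Nb : nat)
  (hN1 : (1 <= N1)%N) (hN2 : (1 <= N2)%N)
  (hsum : (Nw + Nb = N1 + N2)%N)
  (hw1 : (Nw <= N1)%N) (hw2 : (Nw <= N2)%N)
  (k : nat) (hk : (k <= Nw)%N) (j : nat) : (j <= Nw)%N ->
  lam R N1 N2 k * bk R N1 N2 Nw k j =
  bk R N1 N2 Nw k j * Uf R N1 N2 Nw Nb j + Vf R N1 N2 Nw j * bprev R N1 N2 Nw k j.
Proof.
move=> hj.
have hD := @DD_neq0 R N1 N2 hN1 hN2.
have h := @recur R N1 N2 Nw Nb hN1 hN2 hsum hw1 hw2 k hk j hj.
apply: (mulfI hD).
transitivity (N1%:R * N2%:R * (lam R N1 N2 k - 1) * bk R N1 N2 Nw k j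
   + N1%:R * N2%:R * bk R N1 N2 Nw k j); first ring.
rewrite h /Uf /Vf.
move: hD; rewrite mulf_eq0 negb_or => /andP[hA hB].
field.
by rewrite hA hB.
Qed.

Lemma eig_scalar (R : numFieldType) (N1 N2 Nw Nb : nat)
  (hN1 : (1 <= N1)%N) (hN2 : (1 <= N2)%N)
  (hsum : (Nw + Nb = N1 + N2)%N)
  (hw1 : (Nw <= N1)%N) (hw2 : (Nw <= N2)%N)
  (k : nat) (hk : (k <= Nw)%N) (a : nat) : (a <= Nw)%N ->
  (if (0 < a)%N then pp R N1 N2 Nw a.-1 * cc R N1 N2 Nw k a.-1 else 0)
  + (if (a < Nw)%N then qq R N1 N2 Nb a.+1 * cc R N1 N2 Nw k a.+1 else 0)
  + rr R N1 N2 Nw Nb a * cc R N1 N2 Nw k a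
  = lam R N1 N2 k * cc R N1 N2 Nw k a.
Proof.
move=> ha.
have e1 : (if (0 < a)%N then pp R N1 N2 Nw a.-1 * cc R N1 N2 Nw k a.-1 else 0)
   = Ppart R N1 N2 Nw a * cc R N1 N2 Nw k a.-1.
  by rewrite /Ppart; case: ifP; rewrite ?mul0r.
have e2 : (if (a < Nw)%N then qq R N1 N2 Nb a.+1 * cc R N1 N2 Nw k a.+1 else 0)
   = qq R N1 N2 Nb a.+1 * cc R N1 N2 Nw k a.+1.
  case: ifP => // h.
  have -> : a = Nw by apply/eqP; rewrite eqn_leq ha leqNgt h.
  by rewrite cc_out mulr0.
rewrite e1 e2.
set b := bk R N1 N2 Nw k.
transitivity (\sum_(0 <= j < Nw.+1)
   ((-1) ^+ (j + a) * 'C(j, a)%:R * Uf R N1 N2 Nw Nb j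
    + (-1) ^+ (j.+1 + a) * 'C(j.+1, a)%:R * Vf R N1 N2 Nw j.+1) * b j).
  rewrite /cc !mulr_sumr -!big_split /=.
  apply: eq_big_nat => j _.
  have H := congr1 (fun x => x * b j) (@coef R N1 N2 Nw Nb hN1 hN2 hsum j a).
  rewrite /= in H.
  apply: (eq_trans _ (eq_trans H _)); last by [].
  rewrite /b; generalize ((-1) ^+ (j + a.-1) : R) ((-1) ^+ (j + a.+1) : R) ((-1) ^+ (j + a) : R) => s1 s2 s3.
  ring.
rewrite /cc mulr_sumr.
transitivity (\sum_(0 <= j < Nw.+1)
   ((-1) ^+ (j + a) * 'C(j, a)%:R * (b j * Uf R N1 N2 Nw Nb j)
    + (-1) ^+ (j + a) * 'C(j, a)%:R * (Vf R N1 N2 Nw j * bprev R N1 N2 Nw k j))); last first.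
  apply: eq_big_nat => j /andP[_ hj].
  by rewrite /b -mulrDr [in RHS]mulrCA (@lam_b R N1 N2 Nw Nb hN1 hN2 hsum hw1 hw2 k hk j).
rewrite big_split /= [X in _ = _ + X]big_nat_recl // /= !mulr0 add0r.
have hV : Vf R N1 N2 Nw Nw.+1 = 0.
  rewrite /Vf -nat1r (_ : Nw%:R - (1 + Nw%:R) + 1 = 0 :> R) ?mulr0 ?mul0r //.
  ring.
rewrite [X in _ = _ + X](_ : _ = \sum_(0 <= j < Nw.+1)
   (-1) ^+ (j.+1 + a) * 'C(j.+1, a)%:R * Vf R N1 N2 Nw j.+1 * b j); last first.
  rewrite big_nat_recr //= hV !mulr0 mul0r addr0.
  by apply: eq_big_nat => i _; rewrite mulrA.
rewrite -big_split /=.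
apply: eq_big_nat => j _.
rewrite /b.
set s1 := (-1) ^+ (j + a). set s2 := (-1) ^+ (j.+1 + a).
clearbody s1 s2.
ring.
Qed.

Lemma sum_pick (R : numFieldType) (n m : nat) (F : nat -> R) :
  \sum_(s < n) (if (s : nat) == m then F s else 0) = if (m < n)%N then F m else 0.
Proof.
elim: n => [|n IH]; first by rewrite big_ord0.
rewrite big_ord_recr /= IH.
have [->|hnm] := eqVneq n m; first by rewrite ltnn ltnSn add0r.
have -> : (m < n.+1)%N = (m < n)%N by apply/idP/idP; move: hnm; lia.
by rewrite addr0.
Qed.

Lemma row_sum (R : numFieldType) (N1 N2 Nw Nb : nat) (f : nat -> R) (a : nat) :
  (a < Nw.+1)%N ->
  \sum_(s < Nw.+1)
    (if (a == s.+1 :> nat) then pp R N1 N2 Nw s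
     else if (a.+1 == s :> nat) then qq R N1 N2 Nb s
     else if (a == s :> nat) then rr R N1 N2 Nw Nb s else 0) * f s
  = (if (0 < a)%N then pp R N1 N2 Nw a.-1 * f a.-1 else 0)
    + (if (a < Nw)%N then qq R N1 N2 Nb a.+1 * f a.+1 else 0)
    + rr R N1 N2 Nw Nb a * f a.
Proof.
move=> ha.
rewrite (eq_bigr (fun s : 'I_Nw.+1 =>
    (if (s : nat) == a.-1 then (if (0 < a)%N then pp R N1 N2 Nw s * f s else 0) else 0)
  + (if (s : nat) == a.+1 then qq R N1 N2 Nb s * f s else 0)
  + (if (s : nat) == a then rr R N1 N2 Nw Nb s * f s else 0))); last first.
  move=> s _.
  do ![case: ifP]; move=> *; rewrite ?mul0r ?addr0 ?add0r //; exfalso; lia.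
rewrite !big_split /=.
rewrite (sum_pick _ _ _ (fun s => if (0 < a)%N then pp R N1 N2 Nw s * f s else 0)).
rewrite (sum_pick _ _ _ (fun s => qq R N1 N2 Nb s * f s)).
rewrite (sum_pick _ _ _ (fun s => rr R N1 N2 Nw Nb s * f s)) ltnS ha.
rewrite (_ : (a.-1 <= Nw)%N); last lia.
by rewrite ltnS.
Qed.

Lemma cvecE (R : numFieldType) (N1 N2 Nw k : nat) (a : 'I_Nw.+1) :
  cvec R N1 N2 Nw k a 0 = cc R N1 N2 Nw k a.
Proof.
rewrite /cvec mxE /cc.
rewrite [RHS](@big_cat_nat _ _ _ a) //=; last exact: ltnW.
rewrite [X in _ = X + _]big1_seq ?add0r; last first.
  move=> j; rewrite mem_index_iota => /andP[_ hj].
  by rewrite bin_small // mulr0 mul0r.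
apply: eq_big_nat => j /andP[hj _].
by rewrite -[in LHS]signr_odd oddB // -oddD signr_odd.
Qed.

Theorem mainTheorem3 (R : numFieldType) (N1 N2 Nw Nb : nat)
  (hN1 : (1 <= N1)%N) (hN2 : (1 <= N2)%N)
  (hsum : (Nw + Nb = N1 + N2)%N)
  (hw1 : (Nw <= N1)%N) (hw2 : (Nw <= N2)%N)
  (k : nat) (hk : (k <= Nw)%N) :
  (forall i : nat, (k <= i <= Nw)%N -> bden R N1 N2 k i != 0)
  /\
  (forall i : nat, (i <= Nw)%N ->
     N1%:R * N2%:R * (lam R N1 N2 k - 1) * bk R N1 N2 Nw k i =
       (N1%:R - i%:R + 1) * (Nw%:R - i%:R + 1) * bprev R N1 N2 Nw k i
       - i%:R * (Nw%:R - i%:R + Nb%:R + 1) * bk R N1 N2 Nw k i)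
  /\
  (cvec R N1 N2 Nw k != 0 /\
   Tmx R N1 N2 Nw Nb *m cvec R N1 N2 Nw k = lam R N1 N2 k *: cvec R N1 N2 Nw k).
Proof.
have hN : (Nw + Nw <= N1 + N2)%N by lia.
split.
  move=> i /andP[h1 h2]; apply: (@bden_neq0 R N1 N2 Nw) => //; lia.
split.
  exact: (@recur R N1 N2 Nw Nb hN1 hN2 hsum hw1 hw2 k hk).
split.
  apply/negP => /eqP H.
  have := congr1 (fun M : 'cV[R]_(Nw.+1) => M ord_max 0) H.
  rewrite /cvec !mxE /= big_nat1 subnn expr0 binn mul1r.
  rewrite mul1r => /eqP; by rewrite (negbTE (@bk_neq0 R N1 N2 Nw k Nw hN hw1 hk (leqnn _))).
apply/matrixP => a b; rewrite ord1 mxE [in RHS]mxE cvecE.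
under eq_bigr => s _ do rewrite cvecE /Tmx mxE.
rewrite (@row_sum R N1 N2 Nw Nb (cc R N1 N2 Nw k) a (ltn_ord a)).
by apply: (@eig_scalar R N1 N2 Nw Nb hN1 hN2 hsum hw1 hw2 k hk); rewrite -ltnS.
Qed.
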